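(* Let $N_1,N_2\ge 1$ be integers, let $0\le q<1$, and consider the following stochastic particle system (a version of the Biham--Middleton--Levine traffic model) on the toroidal lattice of cells $(i,j)$, $i\in\mathbb{Z}/N_1\mathbb{Z}$, $j\in\mathbb{Z}/N_2\mathbb{Z}$. There are $m<N_1N_2$ particles, each cell is vacant or occupied by exactly one particle, and at each moment every particle is of the first type or of the second type. Time is discrete, $t=0,1,2,\dots$. At each step, first all particles of the first type move: a first-type particle in cell $(i,j)$ moves to cell $(i,j+1)$ (index modulo $N_2$) if that cell is vacant, and stays in $(i,j)$ otherwise. Then all particles of the second type move, with respect to the configuration obtained after the first-type movement: a second-type particle in cell $(i,j)$ moves to $(i+1,j)$ (index modulo $N_1$) if that cell is vacant, and stays in $(i,j)$ otherwise. After that, each particle changes its type with probability $q$. A state (positions and types of all particles) is called a state of free movement if, whenever the system is in this state at some time $t_0$, then with probability $1$ at every step from $t_0$ on every particle moves (no particle is ever delayed). If the greatest common divisor of $N_1$ and $N_2$ is less than $3$, then no state in which there is at least one particle of the first type and at least one particle of the second type is a state of free movement.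
   Context: A particle is ''delayed'' at a step if the cell ahead of it (to the right along its row for the first type, upward along its column for the second type) is occupied at the moment it attempts to move, so that it stays in place. *)

(* Defs.v *)
From HB Require Import structures.
From mathcomp Require Import all_boot all_order all_algebra.
From mathcomp Require Import reals.
Set Implicit Arguments. Unset Strict Implicit. Unset Printing Implicit Defensive.
Import Order.TTheory GRing.Theory Num.Theory.
Local Open Scope ring_scope.

Definition cell (N1 N2 : nat) := ('I_N1 * 'I_N2)%type.

Section BML.
Variables (N1 N2 m : nat).
(* A configuration: position of each of the m particles and its type
   (true = first type, moving j -> j+1; false = second type, moving i -> i+1). *)
Implicit Types (p : 'I_m -> cell N1 N2) (t : 'I_m -> bool).

Definition right_of (c : cell N1 N2) : cell N1 N2 := (c.1, ordS c.2).
Definition down_of (c : cell N1 N2) : cell N1 N2 := (ordS c.1, c.2).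

Definition occupied p (c : cell N1 N2) : bool := [exists k, p k == c].

Definition move1 p t : 'I_m -> cell N1 N2 := fun k =>
  if t k && ~~ occupied p (right_of (p k)) then right_of (p k) else p k.

Definition move2 p t : 'I_m -> cell N1 N2 := fun k =>
  if ~~ t k && ~~ occupied p (down_of (p k)) then down_of (p k) else p k.

Definition step_pos p t := move2 (move1 p t) t.

Definition no_delay p t : bool :=
  [forall k, if t k then ~~ occupied p (right_of (p k))
             else ~~ occupied (move1 p t) (down_of (p k))].

Definition flip t (S : {set 'I_m}) : 'I_m -> bool :=
  fun k => if k \in S then ~~ t k else t k.

(* Probability, starting from (p, t), that no particle is delayed during
   the first n steps; each particle independently changes its type with
   probability q after each step. *)
Fixpoint prob_no_delay {R : realType} (q : R) (n : nat) p t : R :=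
  match n with
  | 0 => 1
  | n'.+1 =>
      if no_delay p t then
        \sum_(S : {set 'I_m})
          q ^+ #|S| * (1 - q) ^+ (m - #|S|) *
          prob_no_delay q n' (step_pos p t) (flip t S)
      else 0
  end.

(* The event is the decreasing intersection over n
   of "no delay during the first n steps", so (continuity of measure) it
   has probability 1 iff each finite-horizon probability equals 1. *)
Definition free_movement {R : realType} (q : R) p t : Prop :=
  forall n : nat, prob_no_delay q n p t = 1.

End BML.

(* Main.v *)
Require Import Defs.
From HB Require Import structures.
From mathcomp Require Import all_boot all_order all_algebra.
From mathcomp Require Import reals.
From mathcomp Require Import zify.
From Stdlib Require Import FunctionalExtensionality.
Import Order.TTheory GRing.Theory Num.Theory.
Local Open Scope ring_scope.
Set Implicit Arguments. Unset Strict Implicit.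

Lemma crt2 N1 n2 c b : (gcdn N1 n2.+1 %| b + n2 * c)%N ->
  exists s, ((c + N1 * s) %% n2.+1 = b %% n2.+1)%N.
Proof.
set N2 := n2.+1; set g := gcdn N1 N2 => /dvdnP [k Hk].
have [a _ Ha] := @Bezoutl N2 N1 (ltn0Sn _).
rewrite gcdnC -/g in Ha.
have HX : ((N1 * a * n2) %% N2 = g %% N2)%N.
  have -> : (N1 * a * n2 = N1 * a * n2 + 0)%N by rewrite addn0.
  have <- : ((g + a * N1) %% N2 = 0)%N by exact: (eqP Ha).
  rewrite modnDmr.
  have -> : (N1 * a * n2 + (g + a * N1) = (N1 * a) * N2 + g)%N by rewrite /N2; lia.
  by rewrite modnMDl.
exists (a * n2 * k)%N.
rewrite mulnA mulnA -modnDmr -modnMml HX modnMml modnDmr mulnC -Hk.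
have -> : (c + (b + n2 * c) = c * N2 + b)%N by rewrite /N2; lia.
by rewrite modnMDl.
Qed.

Lemma pick_n N1 N2 a1 a2 b1 b2 e r1 cc :
  (0 < N2)%N -> (b2 < N2)%N -> (a1 < N1)%N ->
  (b1 + e + r1 = a1 + cc * N1)%N ->
  (gcdn N1 N2 %| b2 + N2.-1 * (a2 + 1 + r1))%N ->
  exists n, ((b1 + e + n) %% N1 = a1 /\ (a2 + n.+1) %% N2 = b2)%N.
Proof.
case: N2 => [//|n2] _ hb2 ha1 Hr /= Hd.
have [s Hs] := @crt2 N1 n2 _ _ Hd.
exists (r1 + N1 * s)%N; split.
  have -> : (b1 + e + (r1 + N1 * s) = (cc + s) * N1 + a1)%N by lia.
  by rewrite modnMDl modn_small.
have -> : (a2 + (r1 + N1 * s).+1 = a2 + 1 + r1 + N1 * s)%N by lia.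
by rewrite Hs modn_small.
Qed.

Lemma exists_collision N1 N2 a1 a2 b1 b2 :
  (0 < N1)%N -> (0 < N2)%N -> (gcdn N1 N2 < 3)%N ->
  (a1 < N1)%N -> (b1 < N1)%N -> (a2 < N2)%N -> (b2 < N2)%N ->
  exists n, (((b1 + n.+1) %% N1 = a1 /\ (a2 + n.+1) %% N2 = b2) \/
             ((b1 + n) %% N1 = a1 /\ (a2 + n.+1) %% N2 = b2))%N.
Proof.
move=> hN1 hN2 hg ha1 hb1 ha2 hb2.
have hg0 : (0 < gcdn N1 N2)%N by rewrite gcdn_gt0 hN1.
have hgN1 := dvdn_gcdl N1 N2; have hgN2 := dvdn_gcdr N1 N2.
have [hg1|hg2] : gcdn N1 N2 = 1%N \/ gcdn N1 N2 = 2%N by lia.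
- have [n Hn] := @pick_n N1 N2 a1 a2 b1 b2 1 (a1 + (N1 - b1) + (N1 - 1)) 2
    hN2 hb2 ha1 ltac:(lia) ltac:(by rewrite hg1 dvd1n).
  by exists n; left; have -> : (b1 + n.+1 = b1 + 1 + n)%N by lia.
- rewrite hg2 in hgN1 hgN2.
  have oN2 : odd N2.-1.
    by move: hgN2; rewrite dvdn2 -{1}(prednK hN2) /= negbK.
  have key : forall r1, (2 %| b2 + N2.-1 * (a2 + 1 + r1))%N =
                        (2 %| b2 + (a2 + 1 + r1))%N.
    by move=> r1; rewrite !dvdn2 oddD oddM oN2 -oddD.
  have [ev|od] := boolP (2 %| a1 + a2 + b1 + b2)%N.
  + have [n Hn] := @pick_n N1 N2 a1 a2 b1 b2 1 (a1 + (N1 - b1) + (N1 - 1)) 2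
      hN2 hb2 ha1 ltac:(lia) ltac:(rewrite hg2 key; lia).
    by exists n; left; have -> : (b1 + n.+1 = b1 + 1 + n)%N by lia.
  + have [n Hn] := @pick_n N1 N2 a1 a2 b1 b2 0 (a1 + (N1 - b1)) 1
      hN2 hb2 ha1 ltac:(lia) ltac:(rewrite hg2 key; lia).
    by exists n; right; rewrite addn0 in Hn.
Qed.

Lemma wsum (R : realType) (m : nat) (q : R) :
  \sum_(S : {set 'I_m}) q ^+ #|S| * (1 - q) ^+ (m - #|S|) = 1.
Proof.
have H := @bigA_distr R 0 1 *%R +%R 'I_m (fun=> q) (fun=> 1 - q).
move: H; rewrite /=.
rewrite (_ : q + (1 - q) = 1); last by rewrite addrC subrK.
rewrite big1_eq => H; rewrite [RHS]H; apply: eq_bigr => S _.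
rewrite (bigID (mem S)) /=.
have -> : (m - #|S| = #|[predC S]|)%N by rewrite -{1}(card_ord m) -(cardC S) addKn.
rewrite -[q ^+ _]prodr_const -[(1 - q) ^+ _]prodr_const.
congr (_ * _); last first.
  by apply: eq_bigr => i Hi; rewrite (negbTE Hi).
  by apply: eq_bigr => i ->.
Qed.

Section Main.
Variables (R : realType) (N1 N2 m : nat) (q : R).
Hypotheses (hq0 : 0 <= q) (hq1 : q < 1).

Lemma w_ge0 (S : {set 'I_m}) : 0 <= q ^+ #|S| * (1 - q) ^+ (m - #|S|).
Proof. by rewrite mulr_ge0 // exprn_ge0 // subr_ge0 ltW. Qed.

Lemma prob_bounds n (p : 'I_m -> cell N1 N2) t :
  0 <= prob_no_delay q n p t <= 1.
Proof.
elim: n p t => [|n IH] p t /=; first by rewrite ler01 lexx.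
case: (no_delay p t); last by rewrite lexx ler01.
apply/andP; split.
  by apply: sumr_ge0 => S _; rewrite mulr_ge0 ?w_ge0 //; case/andP: (IH (step_pos p t) (flip t S)).
rewrite -[X in _ <= X](@wsum R m q); apply: ler_sum => S _.
by apply: ler_piMr; rewrite ?w_ge0 //; case/andP: (IH (step_pos p t) (flip t S)).
Qed.

Lemma prob_step n (p : 'I_m -> cell N1 N2) t :
  prob_no_delay q n.+1 p t = 1 ->
  no_delay p t /\ prob_no_delay q n (step_pos p t) t = 1.
Proof.
rewrite /=; case: (no_delay p t); last by move/esym/eqP; rewrite oner_eq0.
move=> H; split => //.
have Ht : flip t set0 = t by apply: functional_extensionality => k; rewrite /flip in_set0.
have /andP [_ Hle] := prob_bounds n (step_pos p t) t.
apply/eqP; rewrite eq_le Hle /=; rewrite leNgt; apply/negP => Hlt.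
move: H; rewrite (bigD1 set0) //= Ht cards0 expr0 mul1r subn0 => H.
have Hs := @wsum R m q; rewrite (bigD1 set0) //= cards0 expr0 mul1r subn0 in Hs.
have Hw : 0 < (1 - q) ^+ m by rewrite exprn_gt0 // subr_gt0.
have : (1 - q) ^+ m * prob_no_delay q n (step_pos p t) t +
  \sum_(S : {set 'I_m} | S != set0) q ^+ #|S| * (1 - q) ^+ (m - #|S|) *
        prob_no_delay q n (step_pos p t) (flip t S) < 1.
  rewrite -[X in _ < X]Hs.
  apply: ltr_leD; first by rewrite gtr_pMr.
  apply: ler_sum => S _.
  by apply: ler_piMr; rewrite ?w_ge0 //; case/andP: (prob_bounds n (step_pos p t) (flip t S)).
by rewrite H ltxx.
Qed.

End Main.

Definition traj (N1 N2 m : nat) (t : 'I_m -> bool) (p : 'I_m -> cell N1 N2) n :=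
  iter n (fun p0 => step_pos p0 t) p.

Lemma free_traj (R : realType) (N1 N2 m : nat) (q : R) (hq0 : 0 <= q) (hq1 : q < 1)
  (p : 'I_m -> cell N1 N2) t :
  free_movement q p t -> forall n k, prob_no_delay q k (traj t p n) t = 1.
Proof.
move=> Hf n; elim: n => [|n IH] k //=.
exact: (prob_step hq0 hq1 (IH k.+1)).2.
Qed.

Lemma step_free (N1 N2 m : nat) (p : 'I_m -> cell N1 N2) t :
  no_delay p t -> forall k, step_pos p t k = if t k then right_of (p k) else down_of (p k).
Proof.
move=> /forallP H k; have Hk := H k.
have e1 : move1 p t k = if t k then right_of (p k) else p k.
  by rewrite /move1; case: (t k) Hk => //= ->.
rewrite /step_pos {1}/move2 e1; case: (t k) Hk => //= Hk.
by rewrite Hk.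
Qed.

Lemma val_iter N (j : 'I_N) n : val (iter n (@ordS N) j) = ((j + n) %% N)%N.
Proof.
elim: n => [|n IH] /=; first by rewrite addn0 modn_small.
by rewrite IH -addn1 modnDml addn1 addnS.
Qed.

Lemma traj_first (N1 N2 m : nat) (p : 'I_m -> cell N1 N2) (t : 'I_m -> bool) A :
  t A -> (forall n, no_delay (traj t p n) t) ->
  forall n, traj t p n A = ((p A).1, iter n (@ordS N2) (p A).2).
Proof.
move=> hA Hnd; elim=> [|n IH]; first exact: surjective_pairing.
by rewrite /= step_free // hA IH.
Qed.

Lemma traj_second (N1 N2 m : nat) (p : 'I_m -> cell N1 N2) (t : 'I_m -> bool) B :
  ~~ t B -> (forall n, no_delay (traj t p n) t) ->
  forall n, traj t p n B = (iter n (@ordS N1) (p B).1, (p B).2).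
Proof.
move=> hB Hnd; elim=> [|n IH]; first exact: surjective_pairing.
by rewrite /= step_free // (negbTE hB) IH.
Qed.

Unset Implicit Arguments.
Theorem theorem1 (R : realType) (N1 N2 m : nat) (q : R)
  (hN1 : (0 < N1)%N) (hN2 : (0 < N2)%N) (hq0 : 0 <= q) (hq1 : q < 1)
  (hm : (m < N1 * N2)%N) (hgcd : (gcdn N1 N2 < 3)%N)
  (p : 'I_m -> cell N1 N2) (t : 'I_m -> bool)
  (hp : injective p) (h1 : exists k, t k) (h2 : exists k, ~~ t k) :
  ~ free_movement q p t.
Proof.
move=> Hfree.
have Hnd : forall n, no_delay (traj t p n) t.
  by move=> n; have [] := prob_step hq0 hq1 (free_traj hq0 hq1 Hfree n 1).
case: h1 => A hA; case: h2 => B hB.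
have [n Hn] := exists_collision hN1 hN2 hgcd (ltn_ord (p A).1) (ltn_ord (p B).1)
  (ltn_ord (p A).2) (ltn_ord (p B).2).
have /forallP Hall := Hnd n.
have HA := traj_first hA Hnd n; have HB := traj_second hB Hnd n.
have HallA := Hall A; rewrite hA in HallA.
have HallB := Hall B; rewrite (negbTE hB) in HallB.
case: Hn => [[e1 e2]|[e1 e2]].
- move/negP: HallB; apply; apply/existsP; exists A.
  rewrite /move1 hA HallA /= HA HB /right_of /down_of /=.
  apply/eqP; congr pair; apply: val_inj.
    by have := val_iter (p B).1 n.+1; rewrite /= => ->.
  by have := val_iter (p A).2 n.+1; rewrite /= => ->.
- move/negP: HallA; apply; apply/existsP; exists B.
  rewrite HA HB /right_of /=.
  apply/eqP; congr pair; apply: val_inj.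
    by rewrite val_iter.
  by have := val_iter (p A).2 n.+1; rewrite /= => ->.
Qed.
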